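(* For every integer $n\geq 1$, $Q_{2n}$ has a DVOP$[n]$ whose edge set is all of $E(Q_{2n})$.
   Context: $Q_q$ denotes the $q$-dimensional hypercube graph (vertices are $q$-tuples of $0$'s and $1$'s, adjacent iff they differ in exactly one coordinate). $P_k$ is the path with vertices $0,1,\dots,k$ and edges $\hat{j}$ joining $j-1$ and $j$. For a graph $G$, a DVOP$[k]$ is a family $\{p_v\}_{v\in V(G)}$ of embeddings $p_v:P_k\to G$ such that (a) $p_v(\hat{j})=p_{v'}(\hat{j'})$ implies $v=v'$ and $j=j'$, and (b) $p_v(0)=v$ for every $v$; its edge set is the union of the edge images of all $p_v$. *)

(* Defs.v *)
From mathcomp Require Import all_boot.
Set Implicit Arguments. Unset Strict Implicit. Unset Printing Implicit Defensive.

Definition cube (q : nat) : finType := {ffun 'I_q -> bool}.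

Definition cube_adj (q : nat) (x y : cube q) : bool :=
  #|[set i : 'I_q | x i != y i]| == 1.

Definition uedge (T : finType) (a b : T) : {set T} := [set a; b].

(* A graph G = (T, adj), adj symmetric irreflexive.
   p : nat -> T restricted to 0..k is an embedding of the path P_k
   (vertices 0..k, edge j^ joining j-1 and j): injective on vertices and
   mapping each path edge to an edge of G. *)
Definition path_embedding (T : finType) (adj : rel T) (k : nat) (p : nat -> T) : Prop :=
  (forall i j, i <= k -> j <= k -> p i = p j -> i = j) /\
  (forall j, 1 <= j <= k -> adj (p j.-1) (p j)).

Definition edge_img (T : finType) (p : nat -> T) (j : nat) : {set T} :=
  uedge (p j.-1) (p j).

Definition is_DVOP (T : finType) (adj : rel T) (k : nat) (p : T -> nat -> T) : Prop :=
  (forall v, path_embedding adj k (p v)) /\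
  (forall v v' j j', 1 <= j <= k -> 1 <= j' <= k ->
       edge_img (p v) j = edge_img (p v') j' -> v = v' /\ j = j') /\
  (forall v, p v 0 = v).

Definition DVOP_covers_all (T : finType) (adj : rel T) (k : nat) (p : T -> nat -> T) : Prop :=
  forall x y, adj x y -> exists v j, 1 <= j <= k /\ edge_img (p v) j = uedge x y.

(* Main.v *)
Require Import Defs.
From mathcomp Require Import all_boot zify.
Set Implicit Arguments. Unset Strict Implicit.

Section S.
Variable n : nat.
Local Notation V := (cube (2 * n)).

Definition gv (v : V) (k : nat) : bool := if insub k is Some i then v i else false.
Definition bits (v : V) (m : nat) (b : bool) : bool := gv v (b + m.*2).

Lemma gv_ord (v : V) (i : 'I_(2*n)) : gv v i = v i.
Proof. by rewrite /gv valK. Qed.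

Lemma bnd m (b : bool) : m < n -> b + m.*2 < 2 * n.
Proof. move=> H; rewrite -mul2n; case: b => /=; lia. Qed.
Arguments bnd {m} b.

Lemma bitsE (x : V) m (b : bool) (H : b + m.*2 < 2 * n) : bits x m b = x (Ordinal H).
Proof. by rewrite /bits -(gv_ord x (Ordinal H)). Qed.
Arguments bitsE x {m b}.

Lemma cube_ext (x y : V) : (forall m b, m < n -> bits x m b = bits y m b) -> x = y.
Proof.
move=> H; apply/ffunP => i.
have hi : i./2 < n by rewrite ltn_half_double -mul2n.
have := H _ (odd i) hi; rewrite /bits odd_double_half !gv_ord //.
Qed.

Lemma mkcube (f : nat -> bool -> bool) :
  exists v : V, forall m b, m < n -> bits v m b = f m b.
Proof.
exists [ffun i : 'I_(2*n) => f (i./2) (odd i)] => m b hm.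
rewrite (bitsE _ (bnd b hm)) ffunE /= half_bit_double oddD odd_double.
by case: b.
Qed.

Lemma eq_bm (m m' : nat) (b b' : bool) :
  (b + m.*2 == b' + m'.*2) = (m == m') && (b == b').
Proof.
apply/eqP/andP => [E|[/eqP e1 /eqP e2]]; last by rewrite e1 e2.
split; apply/eqP.
  by have := congr1 half E; rewrite !half_bit_double.
by move: (congr1 odd E) => {E}; rewrite !oddD !odd_double; case: b; case: b'.
Qed.

Lemma adjP (x y : V) :
  cube_adj x y <-> exists m0 b0, m0 < n /\
    forall m b, m < n -> (bits x m b != bits y m b) = (m == m0) && (b == b0).
Proof.
split.
  move=> /cards1P [c Hc].
  have hc : c./2 < n by rewrite ltn_half_double -mul2n.
  exists c./2, (odd c); split => // m b hm.
  move/setP: (Hc) => /(_ (Ordinal (bnd b hm))).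
  rewrite inE in_set1 /= !(bitsE _ (bnd b hm)) => ->.
  rewrite -eq_bm odd_double_half.
  by [].
move=> [m0 [b0 [hm0 H]]]; apply/cards1P; exists (Ordinal (bnd b0 hm0)).
apply/setP => i; rewrite inE in_set1.
have hi : i./2 < n by rewrite ltn_half_double -mul2n.
have := H _ (odd i) hi; rewrite /bits odd_double_half !gv_ord => ->.
apply/andP/eqP => [[/eqP e1 /eqP e2]|->]; first by apply/val_inj; rewrite /= -e1 -e2 odd_double_half.
by rewrite /= half_bit_double oddD odd_double; split => //; by case: (b0).
Qed.

Definition P (v : V) (j : nat) : V :=
  [ffun i : 'I_(2*n) => if i./2 < j then
     (if odd i then bits v (i./2) false else ~~ bits v (i./2) true) else v i].

Lemma bitsP v j m b : m < n -> bits (P v j) m b =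
  if m < j then (if b then bits v m false else ~~ bits v m true) else bits v m b.
Proof.
move=> hm; rewrite (bitsE _ (bnd b hm)) ffunE /= half_bit_double oddD odd_double addbF oddb.
by rewrite -(bitsE v (bnd b hm)).
Qed.

Lemma P0 v : P v 0 = v.
Proof. by apply/ffunP => i; rewrite ffunE. Qed.

Lemma adj_step v j : j < n -> cube_adj (P v j) (P v j.+1).
Proof.
move=> hj; apply/adjP; exists j, (bits v j false != bits v j true); split => // m b hm.
rewrite !bitsP //.
case: (ltngtP m j) => [h|h|->].
- by rewrite ltnS (ltnW h) eqxx.
- by rewrite ltnS leqNgt h eqxx.
rewrite ltnSn /=.
by case: b; case: (bits v j false); case: (bits v j true).
Qed.

Lemma step_diff v a : a < n -> exists b, bits (P v a) a b != bits (P v a.+1) a b.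
Proof.
move=> ha; exists (bits v a false != bits v a true); rewrite !bitsP // ltnn ltnSn.
by case h0: (bits v a false); case h1: (bits v a true); rewrite /= ?h0 ?h1.
Qed.

Lemma same_off v j m b : m < n -> m != j -> bits (P v j) m b = bits (P v j.+1) m b.
Proof.
move=> hm hmj; rewrite !bitsP // ltnS.
by case: (ltngtP m j) hmj => // h _; rewrite ?(ltnW h) // leqNgt h.
Qed.

Lemma diff_at v i j : i < j -> i < n -> P v i <> P v j.
Proof.
move=> hij hi E.
have e0 := congr1 (fun x => bits x i false) E.
have e1 := congr1 (fun x => bits x i true) E.
move: e0 e1 => /=; rewrite !bitsP // ltnn hij.
by case: (bits v i false); case: (bits v i true).
Qed.

Lemma Pinj v v' j : P v j = P v' j -> v = v'.
Proof.
move=> E; apply: cube_ext => m b hm.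
have e0 := congr1 (fun x => bits x m false) E.
have e1 := congr1 (fun x => bits x m true) E.
have eb := congr1 (fun x => bits x m b) E.
move: e0 e1 eb => /=; rewrite !bitsP //; case: (m < j) => //.
move=> e0 e1 _; case: b => //; exact: (can_inj negbK e0).

Qed.

Lemma no_cross v v' j : j < n -> P v j = P v' j.+1 -> P v j.+1 = P v' j -> False.
Proof.
move=> hj E1 E2.
have a0 := congr1 (fun x => bits x j false) E1.
have a1 := congr1 (fun x => bits x j true) E1.
have c0 := congr1 (fun x => bits x j false) E2.
have c1 := congr1 (fun x => bits x j true) E2.
move: a0 a1 c0 c1 => /=; rewrite !bitsP // ltnn ltnSn.
by case: (bits v j false); case: (bits v j true); case: (bits v' j false); case: (bits v' j true).
Qed.

Lemma cover_dir x y m0 : m0 < n ->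
  (forall m b, m < n -> m != m0 -> bits y m b = bits x m b) ->
  bits y m0 false = ~~ bits x m0 true -> bits y m0 true = bits x m0 false ->
  exists v, P v m0 = x /\ P v m0.+1 = y.
Proof.
move=> hm0 Hoff H0 H1.
have [v Hv] := mkcube (fun m b => if m < m0 then (if b then ~~ bits x m false else bits x m true) else bits x m b).
have Ex : P v m0 = x.
  apply: cube_ext => m b hm; rewrite bitsP // !Hv //.
  case: (m < m0) => //; case: b => //; by rewrite negbK.
exists v; split => //; apply: cube_ext => m b hm.
case: (ltngtP m m0) => [h|h|->].
- by rewrite -same_off ?(ltn_eqF h) // Ex Hoff ?(ltn_eqF h).
- by rewrite -same_off ?(gtn_eqF h) // Ex Hoff ?(gtn_eqF h).
by rewrite bitsP // ltnSn !Hv // ltnn; case: b.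
Qed.
End S.
Arguments bits {n} v m b.
Arguments P {n} v j.

Lemma set2_eq (T : finType) (x y x' y' : T) : x != y ->
  [set x; y] = [set x'; y'] -> (x = x' /\ y = y') \/ (x = y' /\ y = x').
Proof.
move=> nxy E.
have hx : x \in [set x'; y'] by rewrite -E !inE eqxx.
have hy : y \in [set x'; y'] by rewrite -E !inE eqxx orbT.
have hx' : x' \in [set x; y] by rewrite E !inE eqxx.
move: hx hy hx'; rewrite !inE.
case/orP => /eqP ex; case/orP => /eqP ey; subst.
- by rewrite eqxx in nxy.
- by left.
- by right.
- by rewrite eqxx in nxy.
Qed.

Theorem lemma8 (n : nat) : 1 <= n ->
  exists p : cube (2 * n) -> nat -> cube (2 * n),
    is_DVOP (@cube_adj (2 * n)) n p /\ DVOP_covers_all (@cube_adj (2 * n)) n p.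
Proof.
move=> hn; exists (@P n); split; last first.
  move=> x y /adjP [m0 [b0 [hm0 H]]].
  have Hoff : forall m b, m < n -> m != m0 -> bits y m b = bits x m b.
    move=> m b hm hne; have := H m b hm; rewrite (negbTE hne) /=.
    by move/negbFE/eqP.
  have Hoff' : forall m b, m < n -> m != m0 -> bits x m b = bits y m b.
    by move=> *; rewrite Hoff.
  have h0 := H m0 false hm0; have h1 := H m0 true hm0.
  rewrite eqxx /= in h0 h1.
  case: (boolP ((bits y m0 false == ~~ bits x m0 true) && (bits y m0 true == bits x m0 false))).
    case/andP => /eqP e0 /eqP e1.
    have [v [E1 E2]] := cover_dir hm0 Hoff e0 e1.
    by exists v, m0.+1; split; [rewrite ltnS hm0 | rewrite /edge_img /= E1 E2].
  move=> hneg.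
  have [e0 e1] : bits x m0 false = ~~ bits y m0 true /\ bits x m0 true = bits y m0 false.
    move: h0 h1 hneg; case: (b0); case: (bits x m0 false); case: (bits x m0 true);
    case: (bits y m0 false); case: (bits y m0 true) => //.
  have [v [E1 E2]] := cover_dir hm0 Hoff' e0 e1.
  by exists v, m0.+1; split; [rewrite ltnS hm0 | rewrite /edge_img /uedge /= E1 E2 setUC].
split; last split.
- move=> v; split.
    move=> i j hi hj E; case: (ltngtP i j) => [h|h|//]; exfalso.
      exact: (diff_at h (leq_trans h hj) E).
    exact: (diff_at h (leq_trans h hi) (esym E)).
  move=> [|j] /andP[h1 hj] //; exact: adj_step.
- move=> v v' [|a] [|a'] // /andP [_ ha] /andP [_ ha'].
  rewrite /edge_img /uedge /= => E.
  have nxy : P v a != P v a.+1 by apply/eqP; apply: diff_at.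
  have [b hb] := step_diff v ha.
  case: (eqVneq a a') => [eaa|naa]; last first.
    exfalso; case: (set2_eq nxy E) => [[e1 e2]|[e1 e2]]; rewrite e1 e2 in hb.
      by rewrite (same_off v' b ha naa) eqxx in hb.
    by rewrite (same_off v' b ha naa) eqxx in hb.
  subst a'; case: (set2_eq nxy E) => [[e1 e2]|[e1 e2]].
    by split => //; apply: Pinj e1.
  by exfalso; apply: (no_cross ha e1 e2).
- by move=> v; rewrite P0.
Qed.
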